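(* If $G$ is a graph with no isolated vertices and total domination number $\gamma_t(G) = 3$, then $\gamma_{\rm gr}^t(G) > 3$.
   Context: All graphs are finite, simple, without isolated vertices. $\gamma_t(G)$ is the minimum size of a set $D$ of vertices such that every vertex of $G$ has a neighbor in $D$. $N(v)$ denotes the open neighborhood of $v$. A sequence $S=(v_1,\ldots,v_k)$ of distinct vertices of $G$ is a legal (open neighborhood) sequence if $N(v_i)\setminus \bigcup_{j=1}^{i-1} N(v_j)\neq\emptyset$ for every $i\in\{2,\ldots,k\}$. It is a total dominating sequence if moreover the set $\{v_1,\ldots,v_k\}$ is a total dominating set of $G$. The Grundy total domination number $\gamma_{\rm gr}^t(G)$ is the maximum length of a total dominating sequence of $G$. *)

(* Defs.v *)
From mathcomp Require Import all_boot.
Set Implicit Arguments. Unset Strict Implicit. Unset Printing Implicit Defensive.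

Definition simple_graph (T : finType) (e : rel T) : Prop :=
  symmetric e /\ irreflexive e.

Definition no_isolated (T : finType) (e : rel T) : Prop :=
  forall v : T, exists u : T, e v u.

Definition N (T : finType) (e : rel T) (v : T) : {set T} := [set u | e v u].

Definition total_dominating (T : finType) (e : rel T) (D : {set T}) : bool :=
  [forall v, [exists u in D, e v u]].

Definition is_gamma_t (T : finType) (e : rel T) (k : nat) : Prop :=
  (exists D : {set T}, total_dominating e D /\ #|D| = k) /\
  (forall D : {set T}, total_dominating e D -> k <= #|D|).

Definition Nunion (T : finType) (e : rel T) (s : seq T) : {set T} :=
  \bigcup_(v <- s) N e v.

(* legal open neighbourhood sequence: distinct vertices, each v_i (i >= 2)
   footprints a vertex not in the union of previous neighbourhoods *)
Definition legal_seq (T : finType) (e : rel T) (s : seq T) : bool :=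
  uniq s &&
  all (fun i : nat =>
         if s is x0 :: _ then N e (nth x0 s i) :\: Nunion e (take i s) != set0
         else true)
      (iota 1 (size s).-1).

Definition total_dominating_seq (T : finType) (e : rel T) (s : seq T) : bool :=
  legal_seq e s && total_dominating e [set x in s].

(* Main.v *)
Require Import Defs.
From mathcomp Require Import all_boot.

Lemma Nunion_in (T : finType) (e : rel T) (s : seq T) v :
  (v \in Nunion e s) = has (fun x => e x v) s.
Proof.
elim: s => [|x s IH]; rewrite /Nunion ?big_nil ?big_cons.
  by rewrite inE.
rewrite in_setU -/(Nunion e s) IH /N inE //=.
Qed.

Lemma legal_rcons (T : finType) (e : rel T) (s : seq T) w :
  legal_seq e s -> w \notin s -> N e w :\: Nunion e s != set0 ->
  legal_seq e (rcons s w).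
Proof.
case/andP=> Hu Ha Hw Hn; apply/andP; split; first by rewrite rcons_uniq Hw.
case: s Hu Ha Hw Hn => [|x0 s'] //= Hu Ha Hw Hn.
rewrite size_rcons -(addn1 (size s')) iotaD all_cat; apply/andP; split.
  apply/allP => i Hi; have := allP Ha i Hi.
  move: Hi; rewrite mem_iota => /andP [Hi1 Hi2].
  have Hi3 : i <= size s' by move: Hi2; rewrite add1n ltnS.
  rewrite -rcons_cons nth_rcons /= ltnS Hi3.
  by rewrite -rcons_cons -cats1 take_cat [size _]/= ltnS Hi3.
apply/allP => i; rewrite add1n inE => /eqP ->.
rewrite -rcons_cons nth_rcons /= ltnn eqxx -cats1 take_cat /= ltnn subnn take0 cats0.
done.
Qed.

Lemma extend (T : finType) (e : rel T) :
  symmetric e -> no_isolated e ->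
  forall n s, #|[set v | ~~ has (e v) s]| <= n -> legal_seq e s ->
  exists t, total_dominating_seq e (s ++ t).
Proof.
move=> Hsym Hiso; elim=> [|n IH] s Hn Hl.
  exists [::]; rewrite cats0 /total_dominating_seq Hl /=.
  apply/forallP => v; move: Hn; rewrite leqn0 => /eqP/cards0_eq/setP/(_ v).
  rewrite !inE => /negbFE/hasP [u Hu Hvu]; apply/existsP; exists u.
  by rewrite inE Hu Hvu.
case: (boolP (total_dominating e [set x in s])) => Htd.
  by exists [::]; rewrite cats0 /total_dominating_seq Hl Htd.
move: Htd => /forallPn [v /existsPn Hv].
have Hnv : ~~ has (e v) s.
  apply/hasPn => u Hu; have := Hv u; by rewrite inE Hu.
case: (Hiso v) => w Hvw.
have Hws : w \notin s by apply/negP => Hws; move/hasPn: Hnv => /(_ w Hws); rewrite Hvw.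
have Hl' : legal_seq e (rcons s w).
  apply: legal_rcons => //; apply/set0Pn; exists v.
  rewrite in_setD Nunion_in /N inE Hsym Hvw andbT.
  apply/hasPn => x Hx; rewrite Hsym; by move/hasPn: Hnv => /(_ x Hx).
have Hsub : [set v | ~~ has (e v) (rcons s w)] \proper [set v | ~~ has (e v) s].
  apply/properP; split.
    apply/subsetP => x; rewrite !inE -cats1 has_cat negb_or; by case/andP.
  exists v; first by rewrite inE.
  by rewrite inE -cats1 has_cat /= Hvw orbT.
have := IH (rcons s w) _ Hl'.
case.
  by rewrite -ltnS; apply: leq_trans Hn; apply: proper_card.
by move=> t Ht; exists (w :: t); rewrite -cat_rcons.
Qed.

(* gamma_gr^t(G) > 3 means: some total dominating sequence has length > 3 *)
Theorem mainTheorem3 (T : finType) (e : rel T) :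
  simple_graph e -> no_isolated e -> is_gamma_t e 3 ->
  exists s : seq T, total_dominating_seq e s /\ 3 < size s.
Proof.
move=> [Hsym Hirr] Hiso [[D [_ HD]] Hmin].
have : 0 < #|D| by rewrite HD.
case/card_gt0P => x _.
case: (Hiso x) => y Hxy.
have : ~~ total_dominating e [set x; y].
  apply/negP => /Hmin; rewrite cards2; by case: (_ != _).
case/forallPn => u /existsPn Hu.
have Hux : ~~ e u x by have := Hu x; rewrite !inE eqxx.
have Huy : ~~ e u y by have := Hu y; rewrite !inE eqxx orbT.
case: (Hiso u) => z Huz.
have Hyx : e y x by rewrite Hsym.
have Hxx : ~~ e x x by rewrite Hirr.
have Huu : ~~ e u u by rewrite Hirr.
have Hzu : e z u by rewrite Hsym.
have Hxu : ~~ e x u by rewrite Hsym.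
have Hyu : ~~ e y u by rewrite Hsym.
have L1 : legal_seq e [:: u] by [].
have L2 : legal_seq e (rcons [:: u] x).
  apply: legal_rcons L1 _ _.
    rewrite inE; apply/eqP => Exu; move: Huy; by rewrite -Exu Hxy.
  apply/set0Pn; exists y; by rewrite in_setD Nunion_in /N inE /= (negbTE Huy) Hxy.
have L3 : legal_seq e (rcons [:: u; x] y).
  apply: legal_rcons L2 _ _.
    rewrite !inE negb_or; apply/andP; split; apply/eqP => E.
      by move: Hux; rewrite -E Hyx.
    by move: Hxy; rewrite E Hirr.
  apply/set0Pn; exists x; by rewrite in_setD Nunion_in /N inE /= (negbTE Hux) (negbTE Hxx) Hyx.
have L4 : legal_seq e (rcons [:: u; x; y] z).
  apply: legal_rcons L3 _ _.
    rewrite !inE !negb_or; apply/and3P; split; apply/eqP => E.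
    - by move: Huz; rewrite E Hirr.
    - by move: Huz; rewrite E (negbTE Hux).
    - by move: Huz; rewrite E (negbTE Huy).
  apply/set0Pn; exists u.
  by rewrite in_setD Nunion_in /N inE /= (negbTE Huu) (negbTE Hxu) (negbTE Hyu) Hzu.
have [t Ht] := @extend T e Hsym Hiso #|T| _ (max_card _) L4.
by exists (rcons [:: u; x; y] z ++ t); split => //; rewrite size_cat.
Qed.
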